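(* For every infinite cardinal $\kappa$ and every natural number $N$ there is a digraph $D$ with $\chi(D)>\kappa$ whose underlying undirected graph has no odd cycle of length less than $N$.
   Context: A digraph is a pair $D=(V,E)$ with $E\subseteq V^2$ such that $uv\in E$ implies $vu\notin E$; its underlying undirected graph has an edge $uv$ iff $uv\in E$ or $vu\in E$. The dichromatic number $\chi(D)$ is the minimal number of acyclic vertex sets (sets inducing no directed cycle) needed to cover the vertex set of $D$. *)

(* Defs.v *)
From Stdlib Require Import Arith.

Definition digraph {V : Type} (E : V -> V -> Prop) : Prop :=
  forall u v, E u v -> ~ E v u.

Definition und_adj {V : Type} (E : V -> V -> Prop) (u v : V) : Prop :=
  E u v \/ E v u.

Definition cycle_of_length {V : Type} (R : V -> V -> Prop) (k : nat)
  (f : nat -> V) : Prop :=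
  (forall i j, i < k -> j < k -> f i = f j -> i = j) /\
  (forall i, i < k -> R (f i) (f ((i + 1) mod k))).

Definition acyclic_set {V : Type} (E : V -> V -> Prop) (S : V -> Prop) : Prop :=
  ~ exists k f, 2 <= k /\ cycle_of_length E k f /\ (forall i, i < k -> S (f i)).

Definition has_cycle_of_length {V : Type} (R : V -> V -> Prop) (k : nat) : Prop :=
  3 <= k /\ exists f, cycle_of_length R k f.

Definition infinite_type (K : Type) : Prop :=
  forall l : list K, exists x, ~ List.In x l.

(* chi(D) > |K|: V cannot be covered by |K| acyclic sets, i.e. for every
   map c : V -> K some colour class is not acyclic. *)
Definition dichromatic_gt {V : Type} (E : V -> V -> Prop) (K : Type) : Prop :=
  forall c : V -> K, exists x : K, ~ acyclic_set E (fun v => c v = x).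

(* Main.v *)
Require Import Defs.
From Stdlib Require Import Arith Lia Classical ClassicalDescription.

Record Dg := mkDg { dV : Type; dR : dV -> dV -> Prop }.

Definition und {V : Type} (R : V -> V -> Prop) (x y : V) : Prop := R x y \/ R y x.

Definition arc (D : Dg) : Dg :=
  mkDg {p : dV D * dV D | dR D (fst p) (snd p)}
       (fun p q => snd (proj1_sig p) = fst (proj1_sig q)).

Fixpoint arcn (m : nat) (D : Dg) : Dg :=
  match m with 0 => D | S m => arc (arcn m D) end.

Fixpoint Pw (m : nat) (C : Type) : Type :=
  match m with 0 => C | S m => Pw m (C -> Prop) end.

Definition PF (D : Dg) (C : Type) : Prop :=
  forall phi : dV D -> C, exists u v, und (dR D) u v /\ phi u = phi v.

Lemma arc_PF D C : PF D (C -> Prop) -> PF (arc D) C.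
Proof.
  intros H c.
  pose (f := fun x (a : C) => exists p : dV (arc D), fst (proj1_sig p) = x /\ c p = a).
  destruct (H f) as [u [v [Huv Hf]]].
  assert (gen : forall u v, dR D u v -> f u = f v ->
            exists p q, und (dR (arc D)) p q /\ c p = c q).
  { clear u v Huv Hf. intros u v R fe.
    pose (p0 := exist (fun p => dR D (fst p) (snd p)) (u,v) R : dV (arc D)).
    assert (Hv : f v (c p0)). { rewrite <- fe. exists p0. split; reflexivity. }
    destruct Hv as [q [Hq1 Hq2]]. exists p0, q. split.
    - left. simpl. symmetry; exact Hq1.
    - symmetry; exact Hq2. }
  destruct Huv as [R|R]; [apply (gen u v R Hf) | ].
  destruct (gen v u R (eq_sym Hf)) as [p [q [Hpq Hc]]].
  exists p, q; auto.
Qed.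

Lemma arcn_PF m : forall D C, PF D (Pw m C) -> PF (arcn m D) C.
Proof.
  induction m as [|m IH]; intros D C H; simpl; auto.
  apply arc_PF. apply IH. exact H.
Qed.

Definition Keyed (D : Dg) (L : Type) (lt : L -> L -> Prop) : Prop :=
  exists key : dV D -> L, forall x y, dR D x y -> lt (key x) (key y).

Lemma arc_Keyed D L lt : Keyed D L lt -> Keyed (arc D) L lt.
Proof.
  intros [key Hk]. exists (fun p => key (fst (proj1_sig p))).
  intros [[a b] Hab] [[c d] Hcd]; simpl in *. intros ->. apply Hk; exact Hab.
Qed.

Lemma arcn_Keyed m D L lt : Keyed D L lt -> Keyed (arcn m D) L lt.
Proof. induction m; simpl; auto. intros H; apply arc_Keyed; auto. Qed.

Fixpoint cnt (s : nat -> bool) (n : nat) : nat :=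
  match n with 0 => 0 | S n => cnt s n + (if s n then 1 else 0) end.

Definition OG (D : Dg) (g : nat) : Prop :=
  forall l (w : nat -> dV D) (s : nat -> bool),
    (forall t, t < l -> if s t then und (dR D) (w t) (w (S t)) else w t = w (S t)) ->
    w l = w 0 -> Nat.odd (cnt s l) = true -> g <= cnt s l.

Fixpoint gsq (sg tau : nat -> bool) (b : bool) (t : nat) : bool :=
  match t with 0 => b | S t => if sg t then tau t else gsq sg tau b t end.

Lemma gsq_indep sg tau n : forall b b', (exists t, t < n /\ sg t = true) ->
  gsq sg tau b n = gsq sg tau b' n.
Proof.
  induction n as [|n IH]; intros b b' [t [Ht Hs]]; [lia|].
  simpl. destruct (sg n) eqn:E; auto.
  apply IH. exists t. split; auto.
  destruct (Nat.eq_dec t n); [subst; congruence | lia].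
Qed.

Lemma cnt_pos s n : 0 < cnt s n -> exists t, t < n /\ s t = true.
Proof.
  induction n as [|n IH]; simpl; [lia|]. intros H.
  destruct (s n) eqn:E.
  - exists n; auto.
  - rewrite Nat.add_0_r in H. destruct (IH H) as [t [? ?]]. exists t; split; auto.
Qed.

Lemma cnt_zero s n : cnt s n = 0 -> forall t, t < n -> s t = false.
Proof.
  induction n as [|n IH]; simpl; intros H t Ht; [lia|].
  destruct (s n) eqn:E; [lia|]. rewrite Nat.add_0_r in H.
  destruct (Nat.eq_dec t n); [subst; auto | apply IH; auto; lia].
Qed.

Lemma cnt_split (a b c : nat -> bool) n :
  (forall t, t < n -> (if a t then 1 else 0) = (if b t then 1 else 0) + (if c t then 1 else 0)) ->
  cnt a n = cnt b n + cnt c n.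
Proof.
  induction n as [|n IH]; simpl; intros H; auto.
  rewrite IH by (intros; apply H; lia). rewrite (H n) by lia. lia.
Qed.

Lemma cnt_chg_even (g : nat -> bool) n :
  Nat.even (cnt (fun t => negb (Bool.eqb (g t) (g (S t)))) n) = Bool.eqb (g 0) (g n).
Proof.
  induction n as [|n IH]; simpl.
  - destruct (g 0); reflexivity.
  - rewrite Nat.even_add, IH.
    destruct (g 0), (g n), (g (S n)); reflexivity.
Qed.

Lemma cnt_true n : cnt (fun _ => true) n = n.
Proof. induction n; simpl; lia. Qed.

Lemma chain_lt {L : Type} (lt : L -> L -> Prop)
  (tr : forall x y z, lt x y -> lt y z -> lt x z) (k : nat -> L) (sg : nat -> bool) n :
  (forall t, t < n -> if sg t then lt (k t) (k (S t)) else k t = k (S t)) ->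
  (k 0 = k n /\ forall t, t < n -> sg t = false) \/ lt (k 0) (k n).
Proof.
  induction n as [|n IH]; intros H.
  - left; split; auto; intros; lia.
  - assert (Hn := H n (Nat.lt_succ_diag_r n)).
    destruct IH as [[E Hf]|Hlt]; [intros; apply H; lia| |].
    + destruct (sg n) eqn:Es.
      * right. rewrite E. exact Hn.
      * left. split; [congruence|]. intros t Ht.
        destruct (Nat.eq_dec t n); [subst; auto | apply Hf; lia].
    + right. destruct (sg n); [eapply tr; eauto | rewrite <- Hn; auto].
Qed.

Lemma arc_OG (L : Type) (lt : L -> L -> Prop) (irr : forall x, ~ lt x x)
  (tr : forall x y z, lt x y -> lt y z -> lt x z) D g :
  Keyed D L lt -> OG D g -> OG (arc D) (S (S g)).
Proof.
  intros [key Hkey] HOG l e sg Hstep Hcl Hodd.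
  pose (tau := fun t => if excluded_middle_informative
          (snd (proj1_sig (e t)) = fst (proj1_sig (e (S t)))) then true else false).
  assert (Hmove : exists t, t < l /\ sg t = true).
  { apply cnt_pos. destruct (cnt sg l); simpl in Hodd; [discriminate|lia]. }
  pose (b0 := gsq sg tau false l).
  pose (g' := gsq sg tau b0).
  assert (Hg : g' l = g' 0).
  { unfold g'. simpl. unfold b0. apply gsq_indep; auto. }
  assert (HgS : forall t, g' (S t) = if sg t then tau t else g' t) by reflexivity.
  pose (w := fun t => if g' t then fst (proj1_sig (e t)) else snd (proj1_sig (e t))).
  pose (s := fun t => andb (sg t) (Bool.eqb (g' t) (g' (S t)))).
  pose (chg := fun t => negb (Bool.eqb (g' t) (g' (S t)))).
  assert (Hsplit : cnt sg l = cnt s l + cnt chg l).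
  { apply cnt_split. intros t Ht. unfold s, chg. rewrite HgS.
    destruct (sg t); simpl; [destruct (g' t), (tau t); reflexivity|].
    destruct (g' t); reflexivity. }
  assert (Heven : Nat.even (cnt chg l) = true).
  { unfold chg. rewrite cnt_chg_even. rewrite Hg. destruct (g' 0); reflexivity. }
  assert (Hnz : cnt chg l <> 0).
  { intros H0.
    assert (Hc : forall t, t <= l -> g' t = g' 0).
    { induction t as [|t IH]; intros Ht; auto.
      assert (Ct := cnt_zero _ _ H0 t ltac:(lia)). unfold chg in Ct.
      rewrite <- (IH ltac:(lia)).
      destruct (g' t), (g' (S t)); simpl in Ct; congruence. }
    assert (Htau : forall t, t < l -> sg t = true -> tau t = g' 0).
    { intros t Ht Hs. rewrite <- (Hc (S t) ltac:(lia)). rewrite HgS, Hs. auto. }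
    pose (k := fun t => key (fst (proj1_sig (e t)))).
    assert (Ek : k l = k 0) by (unfold k; rewrite Hcl; auto).
    destruct (g' 0) eqn:Eg0.
    - destruct (chain_lt lt tr k sg l) as [[_ Hf]|Hlt].
      + intros t Ht. assert (St := Hstep t Ht). destruct (sg t) eqn:Es.
        * assert (T := Htau t Ht Es). unfold tau in T.
          destruct (excluded_middle_informative _) as [Eq|]; [|discriminate].
          unfold k. rewrite <- Eq. apply Hkey. exact (proj2_sig (e t)).
        * unfold k. rewrite St. reflexivity.
      + destruct Hmove as [t [Ht Hs]]. rewrite Hf in Hs; auto; discriminate.
      + rewrite Ek in Hlt. exact (irr _ Hlt).
    - destruct (chain_lt (fun a b => lt b a) (fun x y z H1 H2 => tr z y x H2 H1) k sg l)
        as [[_ Hf]|Hlt].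
      + intros t Ht. assert (St := Hstep t Ht). destruct (sg t) eqn:Es.
        * assert (T := Htau t Ht Es). unfold tau in T.
          destruct (excluded_middle_informative _) as [Eq|Neq]; [discriminate|].
          destruct St as [St|St]; [simpl in St; contradiction|]. simpl in St.
          unfold k. rewrite <- St. apply Hkey. exact (proj2_sig (e (S t))).
        * unfold k. rewrite St. reflexivity.
      + destruct Hmove as [t [Ht Hs]]. rewrite Hf in Hs; auto; discriminate.
      + rewrite Ek in Hlt. exact (irr _ Hlt). }
  assert (Hs_odd : Nat.odd (cnt s l) = true).
  { apply Nat.odd_spec. apply Nat.odd_spec in Hodd. apply Nat.even_spec in Heven.
    destruct Hodd as [a Ha]. destruct Heven as [b Hb]. exists (a - b). lia. }
  assert (HOGs : g <= cnt s l).
  { apply (HOG l w s); auto.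
    - intros t Ht. assert (St := Hstep t Ht). unfold s, w. rewrite HgS.
      destruct (sg t) eqn:Es; simpl.
      + destruct St as [St|St]; simpl in St;
        unfold tau; destruct (excluded_middle_informative _) as [Eq|Neq];
        destruct (g' t) eqn:Eg; simpl.
        all: first [ exact Eq | (exfalso; apply Neq; exact St)
                   | (left; rewrite <- Eq; exact (proj2_sig (e t)))
                   | (symmetry; exact St)
                   | (rewrite St; right; exact (proj2_sig (e t))) ].
      + rewrite St. reflexivity.
    - unfold w. rewrite Hg, Hcl. reflexivity. }
  apply Nat.even_spec in Heven. destruct Heven as [b Hb]. lia.
Qed.

Lemma cantor (A : Type) (h : (A -> Prop) -> A) :
  (forall X Y, h X = h Y -> X = Y) -> False.
Proof.
  intros inj.
  pose (Dg := fun a => exists X, h X = a /\ ~ X a).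
  destruct (classic (Dg (h Dg))) as [Hd|Hd].
  - assert (Hd' := Hd). destruct Hd' as [X [HX nX]]. apply inj in HX. subst X.
    contradiction.
  - apply Hd. exists Dg. split; auto.
Qed.

Lemma base_PF (A : Type) (lt : (A -> Prop) -> (A -> Prop) -> Prop)
  (tot : forall x y, x <> y -> lt x y \/ lt y x) :
  PF (mkDg (A -> Prop) lt) A.
Proof.
  intros phi.
  destruct (classic (exists u v, u <> v /\ phi u = phi v)) as [[u [v [Huv E]]]|Hn].
  - exists u, v. split; [apply tot|]; auto.
  - exfalso. apply (cantor A phi). intros X Y E.
    apply NNPP. intros Hne. apply Hn. exists X, Y. auto.
Qed.

Lemma base_OG D : OG D 1.
Proof.
  intros l w s _ _ Hodd. destruct (cnt s l); simpl in Hodd; [discriminate|lia].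
Qed.

Lemma arcn_OG (L : Type) (lt : L -> L -> Prop) (irr : forall x, ~ lt x x)
  (tr : forall x y z, lt x y -> lt y z -> lt x z) m : forall D,
  Keyed D L lt -> OG (arcn m D) (1 + 2 * m).
Proof.
  induction m as [|m IH]; intros D HK.
  - apply base_OG.
  - change (arcn (S m) D) with (arc (arcn m D)).
    replace (1 + 2 * S m) with (S (S (1 + 2 * m))) by lia.
    apply (arc_OG L lt irr tr). apply arcn_Keyed; auto. apply IH; auto.
Qed.

Section H.
Variables (K LH : Type) (ltH : LH -> LH -> Prop).
Hypotheses (irrH : forall x, ~ ltH x x)
  (trH : forall x y z, ltH x y -> ltH y z -> ltH x z)
  (totH : forall x y, x <> y -> ltH x y \/ ltH y x)
  (cantH : forall h : LH -> (K -> Prop) * (K -> Prop), (forall x y, h x = h y -> x = y) -> False).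

Definition VH : Type := {p : LH * LH | ltH (fst p) (snd p)}.
Definition RH (u v : VH) : Prop :=
  snd (proj1_sig u) = fst (proj1_sig v) \/ ltH (snd (proj1_sig v)) (fst (proj1_sig u)).

Lemma RH_anti u v : RH u v -> RH v u -> False.
Proof.
  destruct u as [[a b] Hab], v as [[c d] Hcd]; unfold RH; simpl in *.
  intros [E1|L1] [E2|L2]; subst.
  - apply (irrH a). eapply trH; eauto.
  - apply (irrH c); auto.
  - apply (irrH a); auto.
  - apply (irrH a). eapply trH; [exact Hab|]. eapply trH; [exact L2|].
    eapply trH; [exact Hcd| exact L1].
Qed.

Lemma H_prop (psi : VH -> K) : exists x y z, RH x y /\ RH y z /\ RH z x /\
  x <> y /\ y <> z /\ x <> z /\ psi x = psi y /\ psi y = psi z.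
Proof.
  apply NNPP. intros Hno.
  pose (h := fun b : LH =>
    (fun al : K => exists a (H : ltH a b), psi (exist _ (a,b) H) = al,
     fun al : K => exists d (H : ltH b d), psi (exist _ (b,d) H) = al)).
  assert (key : forall b b', ltH b b' -> h b = h b' -> False).
  { intros b b' Hbb' E.
    pose (y := exist (fun p : LH * LH => ltH (fst p) (snd p)) (b,b') Hbb' : VH).
    assert (Hs : snd (h b') (psi y)).
    { rewrite <- E. simpl. exists b', Hbb'. reflexivity. }
    assert (Hf : fst (h b) (psi y)).
    { rewrite E. simpl. exists b, Hbb'. reflexivity. }
    destruct Hs as [d [Hd Ed]]. destruct Hf as [a [Ha Ea]].
    apply Hno.
    exists (exist _ (a,b) Ha), y, (exist _ (b',d) Hd).
    unfold RH; simpl. split; [left; auto|]. split; [left; auto|].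
    split; [right; auto|].
    split; [intros Ex; apply (irrH a); apply (f_equal (fun p => fst (proj1_sig p))) in Ex;
            simpl in Ex; rewrite Ex at 2; auto|].
    split; [intros Ex; apply (irrH b); apply (f_equal (fun p => fst (proj1_sig p))) in Ex;
            simpl in Ex; rewrite Ex at 2; auto|].
    split; [intros Ex; apply (irrH a); apply (f_equal (fun p => fst (proj1_sig p))) in Ex;
            simpl in Ex; rewrite Ex at 2; eapply trH; eauto|].
    split; congruence. }
  apply (cantH h). intros x y E. apply NNPP. intros Hne.
  destruct (totH x y Hne) as [L|L]; [apply (key x y L E) | apply (key y x L (eq_sym E))].
Qed.

End H.

From mathcomp Require ssreflect ssrfun ssrbool eqtype boolp wochoice.

Module WO.
Import ssreflect ssrfun ssrbool eqtype boolp wochoice.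
Lemma strict_total (T : Type) : exists lt : T -> T -> Prop,
  (forall x, ~ lt x x) /\ (forall x y z, lt x y -> lt y z -> lt x z) /\
  (forall x y, x <> y -> lt x y \/ lt y x).
Proof.
have [R wo] := well_ordering_principle (classicType T).
have min3 : forall x y z : classicType T, exists m, (m = x \/ m = y \/ m = z) /\ R m x /\ R m y /\ R m z.
  move=> x y z.
  have [|m [[Am lb] _]] := wo [pred u | (u == x) || (u == y) || (u == z)].
    by exists x; rewrite inE eqxx.
  exists m; split.
    by move: Am; rewrite inE => /orP[/orP[]|] /eqP ->; auto.
  by split; [|split]; apply: lb; rewrite inE eqxx ?orbT.
have refl : forall x, R x x.
  by move=> x; have [m [[->|[->|->]] [? []]]] := min3 x x x.
have antis : forall x y, R x y -> R y x -> x = y.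
  move=> x y Rxy Ryx.
  have [|m [_ U]] := wo [pred u | (u == x) || (u == y)].
    by exists x; rewrite inE eqxx.
  have mx : minimum_of R [pred u | (u == x) || (u == y)] x.
    split; first by rewrite inE eqxx.
    by move=> u; rewrite inE => /orP[] /eqP ->.
  have my : minimum_of R [pred u | (u == x) || (u == y)] y.
    split; first by rewrite inE eqxx orbT.
    by move=> u; rewrite inE => /orP[] /eqP ->.
  by rewrite -(U _ mx) -(U _ my).
have trans : forall x y z, R x y -> R y z -> R x z.
  move=> x y z Rxy Ryz.
  have [m [[->|[->|->]] [Rmx [Rmy Rmz]]]] := min3 x y z => //.
    by rewrite (antis _ _ Rxy Rmx).
  by rewrite -(antis _ _ Ryz Rmy).
have tot : forall x y, R x y \/ R y x.
  move=> x y; have [m [[->|[->|->]] [Rmx [Rmy Rmz]]]] := min3 x y y; auto.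
exists (fun x y => R x y /\ x <> y); split; [|split].
- by move=> x [].
- move=> x y z [Rxy nxy] [Ryz nyz]; split; first exact: trans Rxy Ryz.
  move=> exz; subst z; apply: nxy; exact: antis.
- move=> x y nxy; case: (tot x y) => ?; [left|right]; split=> //; auto.
Qed.
End WO.

Theorem corollary4p6 (K : Type) (HK : infinite_type K) (N : nat) :
  exists (V : Type) (E : V -> V -> Prop),
    digraph E /\ dichromatic_gt E K /\
    (forall k, Nat.odd k = true -> k < N -> ~ has_cycle_of_length (und_adj E) k).
Proof.
  destruct (WO.strict_total ((K -> Prop) * (K -> Prop) -> Prop)) as [ltH [irrH [trH totH]]].
  assert (cantH : forall h : ((K -> Prop) * (K -> Prop) -> Prop) -> (K -> Prop) * (K -> Prop),
            (forall x y, h x = h y -> x = y) -> False) by (intros; eapply cantor; eauto).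
  pose (C := VH _ ltH -> K).
  destruct (WO.strict_total (Pw N C -> Prop)) as [lt [irr [tr tot]]].
  pose (G := arcn N (mkDg (Pw N C -> Prop) lt)).
  assert (HKG : Keyed G _ lt).
  { apply arcn_Keyed. exists (fun x => x). auto. }
  assert (HirrG : forall u, ~ und (dR G) u u).
  { destruct HKG as [key Hk]. intros u [H|H]; apply (irr (key u)); auto. }
  assert (HPF : PF G C).
  { apply arcn_PF. apply base_PF. auto. }
  assert (HOG : OG G (1 + 2 * N)).
  { apply (arcn_OG _ lt irr tr). exists (fun x => x); auto. }
  exists (dV G * VH _ ltH)%type,
    (fun p q => und (dR G) (fst p) (fst q) /\ RH _ ltH (snd p) (snd q)).
  split; [|split].
  - intros [u h] [v h'] [_ H1] [_ H2]. simpl in *. exact (RH_anti _ ltH irrH trH h h' H1 H2).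
  - intros c.
    destruct (HPF (fun u h => c (u, h))) as [u [v [Huv Ephi]]].
    destruct (H_prop K _ ltH irrH trH totH cantH (fun h => c (u, h)))
      as [x [y [z [Rxy [Ryz [Rzx [nxy [nyz [nxz [Cxy Cyz]]]]]]]]]].
    assert (nuv : u <> v) by (intros ->; apply (HirrG v); auto).
    assert (Hvu : und (dR G) v u) by (destruct Huv; [right|left]; auto).
    assert (Cv : forall h, c (v, h) = c (u, h)).
    { intros h. change (c (v, h)) with ((fun h => c (v, h)) h). rewrite <- Ephi. reflexivity. }
    exists (c (u, x)). intros Hac. apply Hac.
    exists 6, (fun i => match i with 0 => (u, x) | 1 => (v, y) | 2 => (u, z)
                               | 3 => (v, x) | 4 => (u, y) | _ => (v, z) end).
    split; [lia|]. split; [split|].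
    + intros i j Hi Hj Heq.
      destruct i as [|[|[|[|[|[|i]]]]]]; destruct j as [|[|[|[|[|[|j]]]]]];
        try lia; try reflexivity; exfalso; injection Heq; intros; congruence.
    + intros i Hi.
      destruct i as [|[|[|[|[|[|i]]]]]]; try lia; simpl; split; auto.
    + intros i Hi.
      destruct i as [|[|[|[|[|[|i]]]]]]; try lia; simpl; rewrite ?Cv; congruence.
  - intros k Hodd Hk [H3 [f [Hinj Hedge]]].
    assert (Hk0 : k <> 0) by lia.
    assert (Hw := HOG k (fun i => fst (f (i mod k))) (fun _ => true)).
    rewrite cnt_true in Hw.
    assert (1 + 2 * N <= k); [|lia].
    apply Hw; auto.
    + intros t Ht. rewrite Nat.mod_small by lia.
      destruct (Hedge t Ht) as [[E1 _]|[E1 _]]; rewrite Nat.add_1_r in E1;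
        [exact E1| destruct E1; [right|left]; auto].
    + rewrite Nat.Div0.mod_same, Nat.Div0.mod_0_l by lia. reflexivity.
Qed.
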